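(* Let $d\ge0$ be an integer. There exist an instance domain $\mathcal{X}$ and a hypothesis class $\mathcal{H}$ with Littlestone dimension $d$ such that the following holds for all integers $k,l\ge0$: if $k<l+d$, then for any $a\ge 0$ there exists a strategy of the adversary, all of whose presented sequences satisfy the $l$-bias assumption with respect to $\mathcal{H}$, such that any algorithm guaranteeing a cumulative mistake penalty of at most $k$ in the randomized prediction model must have cumulative abstention penalty at least $a$.
   Context: Randomized prediction model: at round $t$ the adversary presents $x_t\in\mathcal{X}$; the learner outputs $(p_{t,-},p_{t,+},1-p_{t,-}-p_{t,+})$ with $p_{t,-},p_{t,+}\ge0$, $p_{t,-}+p_{t,+}\le 1$ (probabilities of predicting $-1$, $+1$, abstaining); the adversary reveals $y_t\in\{-1,+1\}$. After $n$ rounds the cumulative mistake penalty is $\sum_{t=1}^n \big(I(y_t=-1)p_{t,+}+I(y_t=+1)p_{t,-}\big)$ and the cumulative abstention penalty is $\sum_{t=1}^n(1-p_{t,+}-p_{t,-})$. Hypotheses are maps $\mathcal{X}\to\{-1,+1\}$. $\mathcal{C}^l$ is the class of functions $x\mapsto 1-2I(x\in D)$ for $D\subseteq\mathcal{X}$, $|D|\le l$, and $\mathcal{H}^l=\{x\mapsto h(x)c(x): h\in\mathcal{H},c\in\mathcal{C}^l\}$. A sequence $(x_1,y_1),\dots,(x_n,y_n)$ satisfies the $l$-bias assumption w.r.t. $\mathcal{H}$ if some $h\in\mathcal{H}^l$ has $h(x_t)=y_t$ for all $t$. The Littlestone dimension of $\mathcal{H}$ is the largest $d$ such that there is a complete binary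 tree of depth $d$ with internal nodes labeled by points of $\mathcal{X}$ such that for every root-to-leaf path (left = label $-1$, right = label $+1$) some $h\in\mathcal{H}$ agrees with all labels on the path. *)

(* Defs.v *)
From Stdlib Require Import Reals List.
Import ListNotations.
Open Scope R_scope.

(* Labels {-1,+1}. *)
Inductive sign : Type := Neg | Pos.

Definition flip (s : sign) : sign := match s with Neg => Pos | Pos => Neg end.

Inductive ltree (X : Type) : Type :=
| Leaf : ltree X
| Node : X -> ltree X -> ltree X -> ltree X.
Arguments Leaf {X}.
Arguments Node {X} _ _ _.

Fixpoint complete_of_depth {X : Type} (t : ltree X) (d : nat) : Prop :=
  match t, d with
  | Leaf, O => True
  | Node _ l r, S d' => complete_of_depth l d' /\ complete_of_depth r d'
  | _, _ => False
  end.

(* Every root-to-leaf path (left = label -1, right = label +1) is realized by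
   some hypothesis satisfying P (P accumulates the labels of the path so far). *)
Fixpoint paths_realized {X : Type} (P : (X -> sign) -> Prop) (t : ltree X) : Prop :=
  match t with
  | Leaf => exists h, P h
  | Node x l r =>
      paths_realized (fun h => P h /\ h x = Neg) l /\
      paths_realized (fun h => P h /\ h x = Pos) r
  end.

Definition shatters {X : Type} (H : (X -> sign) -> Prop) (t : ltree X) : Prop :=
  paths_realized H t.

Definition littlestone_dim_eq {X : Type} (H : (X -> sign) -> Prop) (d : nat) : Prop :=
  (exists t, complete_of_depth t d /\ shatters H t) /\
  (forall t m, complete_of_depth t m -> shatters H t -> (m <= d)%nat).

(* value of x |-> h(x) c(x), where c = 1 - 2 I(. \in D) *)
Definition biased_value {X : Type} (h : X -> sign) (D : X -> Prop) (x : X) (y : sign) : Prop :=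
  (D x /\ y = flip (h x)) \/ (~ D x /\ y = h x).

Definition card_le {X : Type} (D : X -> Prop) (l : nat) : Prop :=
  exists ls : list X, (length ls <= l)%nat /\ forall x, D x -> In x ls.

(* The sequence s satisfies the l-bias assumption w.r.t. H:
   some element of H^l agrees with all labels of s. *)
Definition l_biased {X : Type} (H : (X -> sign) -> Prop) (l : nat)
  (s : list (X * sign)) : Prop :=
  exists h D, H h /\ card_le D l /\
    forall p, In p s -> biased_value h D (fst p) (snd p).

(* A learner maps the history (x_1,y_1),...,(x_{t-1},y_{t-1}) and the current
   instance x_t to (p_{t,-}, p_{t,+}). *)
Definition learner (X : Type) : Type := list (X * sign) -> X -> R * R.

Definition valid_learner {X : Type} (L : learner X) : Prop :=
  forall hist x, 0 <= fst (L hist x) /\ 0 <= snd (L hist x) /\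
                 fst (L hist x) + snd (L hist x) <= 1.

Definition mistake_pen (p : R * R) (y : sign) : R :=
  match y with Neg => snd p | Pos => fst p end.
Definition abstain_pen (p : R * R) : R := 1 - fst p - snd p.

(* cumulative (mistake, abstention) penalties of L on the remaining sequence s,
   given the already-seen history hist (chronological order) *)
Fixpoint penalties_from {X : Type} (L : learner X) (hist : list (X * sign))
  (s : list (X * sign)) : R * R :=
  match s with
  | [] => (0, 0)
  | (x, y) :: rest =>
      let p := L hist x in
      let r := penalties_from L (hist ++ [(x, y)]) rest in
      (mistake_pen p y + fst r, abstain_pen p + snd r)
  end.

Definition cum_mistake {X : Type} (L : learner X) (s : list (X * sign)) : R :=
  fst (penalties_from L [] s).
Definition cum_abstain {X : Type} (L : learner X) (s : list (X * sign)) : R :=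
  snd (penalties_from L [] s).

(* An adversary strategy: a horizon n; at each round it chooses x_t from the
   full history (instances, learner's outputs, labels), and then chooses y_t
   after seeing the learner's output (p_{t,-}, p_{t,+}). *)
Record adversary (X : Type) : Type := {
  adv_rounds : nat;
  adv_x : list (X * (R * R) * sign) -> X;
  adv_y : list (X * (R * R) * sign) -> X -> R * R -> sign
}.
Arguments adv_rounds {X} _.
Arguments adv_x {X} _ _.
Arguments adv_y {X} _ _ _ _.

Definition forget {X : Type} (h : list (X * (R * R) * sign)) : list (X * sign) :=
  map (fun e => (fst (fst e), snd e)) h.

Fixpoint play_from {X : Type} (A : adversary X) (L : learner X) (m : nat)
  (hist : list (X * (R * R) * sign)) : list (X * (R * R) * sign) :=
  match m with
  | O => hist
  | S m' =>
      let x := adv_x A hist in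
      let p := L (forget hist) x in
      let y := adv_y A hist x p in
      play_from A L m' (hist ++ [(x, p, y)])
  end.

Definition presented {X : Type} (A : adversary X) (L : learner X) : list (X * sign) :=
  forget (play_from A L (adv_rounds A) []).

Definition guarantees_mistakes {X : Type} (H : (X -> sign) -> Prop) (l k : nat)
  (L : learner X) : Prop :=
  forall s, l_biased H l s -> cum_mistake L s <= INR k.

(* Main.v *)
Require Import Defs.
From Stdlib Require Import Reals List Arith Lia Lra ZArith.
Import ListNotations.
Open Scope R_scope.

Lemma pr_mono {X : Type} (t : ltree X) : forall (P Q : (X -> sign) -> Prop),
  (forall h, P h -> Q h) -> paths_realized P t -> paths_realized Q t.
Proof.
  induction t as [|x l IHl r IHr]; simpl; intros P Q HPQ HP.
  - destruct HP as [h Hh]; eauto.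
  - destruct HP as [H1 H2]; split.
    + eapply IHl; [|exact H1]; simpl; intros h [a b]; auto.
    + eapply IHr; [|exact H2]; simpl; intros h [a b]; auto.
Qed.

Lemma pr_nonempty {X : Type} (t : ltree X) : forall (P : (X -> sign) -> Prop),
  paths_realized P t -> exists h, P h.
Proof.
  induction t as [|x l IHl r IHr]; simpl; intros P HP.
  - exact HP.
  - destruct HP as [H1 _]. destruct (IHl _ H1) as [h [Hh _]]; eauto.
Qed.

Definition Hcl (d : nat) : (nat -> sign) -> Prop :=
  fun h => card_le (fun x => h x = Neg) d.

Fixpoint tr (i n : nat) : ltree nat :=
  match n with
  | O => Leaf
  | S n' => Node i (tr (S i) n') (tr (S i) n')
  end.

Lemma tr_complete n : forall i, complete_of_depth (tr i n) n.
Proof. induction n; simpl; auto. Qed.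

Lemma tr_shatter d n : forall i g, (i + n <= d)%nat ->
  paths_realized (fun h => Hcl d h /\ forall x, (x < i)%nat -> h x = g x) (tr i n).
Proof.
  induction n as [|n IH]; intros i g Hle; simpl.
  - exists (fun x => if Nat.ltb x i then g x else Pos). split.
    + exists (seq 0 d). rewrite length_seq. split; [lia|].
      intros x Hx. destruct (Nat.ltb x i) eqn:E; [|discriminate].
      apply Nat.ltb_lt in E. apply in_seq. lia.
    + intros x Hx. apply Nat.ltb_lt in Hx. now rewrite Hx.
  - split.
    + eapply pr_mono; [|apply (IH (S i) (fun x => if Nat.eqb x i then Neg else g x)); lia].
      simpl. intros h [Hh Hx]. split; [split; auto|].
      * intros x Hxi. rewrite Hx by lia. destruct (Nat.eqb x i) eqn:E; auto.
        apply Nat.eqb_eq in E; lia.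
      * rewrite Hx by lia. now rewrite Nat.eqb_refl.
    + eapply pr_mono; [|apply (IH (S i) (fun x => if Nat.eqb x i then Pos else g x)); lia].
      simpl. intros h [Hh Hx]. split; [split; auto|].
      * intros x Hxi. rewrite Hx by lia. destruct (Nat.eqb x i) eqn:E; auto.
        apply Nat.eqb_eq in E; lia.
      * rewrite Hx by lia. now rewrite Nat.eqb_refl.
Qed.

Lemma upper_gen (t : ltree nat) : forall m j S (P : (nat -> sign) -> Prop),
  complete_of_depth t m -> paths_realized P t ->
  (forall h, P h -> (forall x, In x S -> h x = Neg) /\
     exists ls, (length ls <= j)%nat /\ forall x, h x = Neg -> In x ls \/ In x S) ->
  (m <= j)%nat.
Proof.
  induction t as [|x l IHl r IHr]; intros m j S P Hc Hp Hinv.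
  - destruct m; simpl in Hc; [lia|contradiction].
  - destruct m as [|m]; simpl in Hc; [lia|]. destruct Hc as [Hcl Hcr].
    simpl in Hp. destruct Hp as [Hpl Hpr].
    destruct (pr_nonempty _ _ Hpr) as [hr [Phr Hrx]].
    assert (HxS : ~ In x S).
    { intro Hin. destruct (Hinv hr Phr) as [A _]. rewrite (A x Hin) in Hrx. discriminate. }
    destruct (pr_nonempty _ _ Hpl) as [hl [Phl Hlx]].
    destruct (Hinv hl Phl) as [_ [ls [Hls Hneg]]].
    destruct (Hneg x Hlx) as [Hin|Hin]; [|contradiction].
    assert (Hj : (1 <= length ls)%nat) by (destruct ls; simpl in *; [contradiction|lia]).
    assert (m <= j - 1)%nat; [|lia].
    eapply (IHl m (j - 1)%nat (x :: S)); [exact Hcl|exact Hpl|].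
    intros h [Ph Hhx]. destruct (Hinv h Ph) as [A [ls' [Hls' Hn']]]. split.
    + intros y [<-|Hy]; auto.
    + destruct (Hn' x Hhx) as [Hin'|Hin']; [|contradiction].
      exists (remove Nat.eq_dec x ls'). split.
      * pose proof (remove_length_lt Nat.eq_dec ls' x Hin'). lia.
      * intros y Hy. destruct (Nat.eq_dec y x) as [->|Hne].
        -- right; left; reflexivity.
        -- destruct (Hn' y Hy) as [Q|Q]; [left; apply in_in_remove; auto|right; right; auto].
Qed.

Lemma ldim d : littlestone_dim_eq (Hcl d) d.
Proof.
  split.
  - exists (tr 0 d). split; [apply tr_complete|].
    unfold shatters. eapply pr_mono; [|apply (tr_shatter d d 0 (fun _ => Pos)); lia].
    simpl. intros h [Hh _]; exact Hh.
  - intros t m Hc Hs. eapply (upper_gen t m d [] (Hcl d)); eauto.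
    intros h Hh. split; [intros x []|]. destruct Hh as [ls [A B]].
    exists ls; split; auto.
Qed.
Definition isNeg (y : sign) : bool := match y with Neg => true | Pos => false end.
Definition negsS (s : list (nat * sign)) : nat := length (filter (fun e => isNeg (snd e)) s).

Definition advF (k n : nat) (eps : R) : adversary nat := {|
  adv_rounds := n;
  adv_x := fun hist => length hist;
  adv_y := fun hist x p =>
    if Nat.ltb (negsS (forget hist)) (S k) then
      (if Rle_dec (1 - eps) (snd p) then Neg else Pos) else Pos |}.

Lemma negsS_app a b : negsS (a ++ b) = (negsS a + negsS b)%nat.
Proof. unfold negsS. now rewrite filter_app, length_app. Qed.

Lemma forget_app {X} (a b : list (X * (R*R) * sign)) : forget (a ++ b) = forget a ++ forget b.
Proof. unfold forget. apply map_app. Qed.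

Lemma play_inv k n0 eps (L : learner nat) m : forall hist,
  exists ext, play_from (advF k n0 eps) L m hist = hist ++ ext /\
    map fst (forget ext) = seq (length hist) m /\
    ((negsS (forget hist) <= S k)%nat -> (negsS (forget hist) + negsS (forget ext) <= S k)%nat) /\
    (valid_learner L -> 0 < eps < 1 ->
      let r := penalties_from L (forget hist) (forget ext) in
      INR (negsS (forget ext)) * (1 - eps) <= fst r /\
      ((S k <= negsS (forget hist) + negsS (forget ext))%nat \/
       INR m * eps <= fst r + snd r + INR (negsS (forget ext)) * eps)).
Proof.
  induction m as [|m IH]; intros hist.
  - exists []. simpl. rewrite app_nil_r. split; [reflexivity|]. split; [reflexivity|].
    split; [unfold negsS; simpl; lia|]. intros _ _. simpl. unfold negsS; simpl. split; [nra|].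
    right. lra.
  - simpl.
    set (x := length hist).
    set (p := L (forget hist) x).
    set (y := if Nat.ltb (negsS (forget hist)) (S k) then
      (if Rle_dec (1 - eps) (snd p) then Neg else Pos) else Pos).
    destruct (IH (hist ++ [(x, p, y)])) as [ext [E1 [E2 [E3 E4]]]].
    exists ((x, p, y) :: ext). rewrite <- app_assoc in E1. simpl in E1.
    rewrite forget_app in E3, E4. rewrite negsS_app in E3, E4.
    assert (Hy : negsS (forget [(x, p, y)]) = if isNeg y then 1%nat else 0%nat).
    { unfold negsS; simpl. destruct y; reflexivity. }
    rewrite Hy in E3, E4.
    split; [exact E1|]. split.
    { simpl. rewrite E2. rewrite length_app. simpl. f_equal. f_equal. lia. }
    assert (Hn : negsS (forget ((x, p, y) :: ext)) =
                 ((if isNeg y then 1 else 0) + negsS (forget ext))%nat).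
    { unfold negsS; simpl. destruct y; reflexivity. }
    rewrite Hn. split.
    { intros Hle. apply Nat.le_lteq in Hle. destruct Hle as [Hlt|Heq].
      - specialize (E3 ltac:(destruct (isNeg y); lia)). lia.
      - unfold y in E3 |- *. rewrite Heq, Nat.ltb_irrefl in *. simpl in *. specialize (E3 ltac:(lia)). lia. }
    intros HV Heps. specialize (E4 HV Heps).
    change (forget ((x,p,y)::ext)) with ((x,y) :: forget ext).
    cbn [penalties_from fst snd]. fold p.
    set (r := penalties_from L (forget hist ++ [(x, y)]) (forget ext)) in *.
    destruct (HV (forget hist) x) as [H1 [H2 H3]]. fold p in H1, H2, H3.
    destruct E4 as [E4a E4b].
    assert (HS: match m with 0%nat => 1 | S _ => INR m + 1 end = INR m + 1) by (destruct m; simpl; lra).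
    rewrite HS, plus_INR.
    subst r. destruct y eqn:Ey; simpl in *.
    +
      assert (1 - eps <= snd p).
      { unfold y in Ey. destruct (Nat.ltb _ _); [|discriminate].
        destruct (Rle_dec _ _); [assumption|discriminate]. }
      unfold abstain_pen. split; [nra|].
      destruct E4b as [E|E]; [left; lia|right; nra].
    + unfold abstain_pen. rewrite Rplus_0_l. split; [nra|].
      destruct E4b as [E|E]; [left; lia|].
      destruct (Nat.ltb (negsS (forget hist)) (S k)) eqn:Elt.
      * destruct (Rle_dec (1 - eps) (snd p)) as [Hr|Hr].
        -- unfold y in Ey. rewrite ?Elt in Ey. simpl in Ey. destruct (Rle_dec (1 - eps) (snd p)); [discriminate|contradiction].
        -- right. nra.
      * left. apply Nat.ltb_ge in Elt. lia.
Qed.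

Lemma nodup_fst_eq (s : list (nat * sign)) : NoDup (map fst s) ->
  forall x y1 y2, In (x, y1) s -> In (x, y2) s -> y1 = y2.
Proof.
  induction s as [|[a b] s IH]; simpl; intros Hnd x y1 y2 H1 H2; [contradiction|].
  inversion Hnd as [|? ? Hni Hnd']; subst.
  destruct H1 as [E1|H1]; destruct H2 as [E2|H2].
  - inversion E1; inversion E2; subst; auto.
  - inversion E1; subst. exfalso. apply Hni. change x with (fst (x, y2)). apply in_map; auto.
  - inversion E2; subst. exfalso. apply Hni. change x with (fst (x, y1)). apply in_map; auto.
  - eauto.
Qed.

Lemma biased_of (d l : nat) (s : list (nat * sign)) : NoDup (map fst s) ->
  (negsS s <= l + d)%nat -> l_biased (Hcl d) l s.
Proof.
  intros Hnd Hn.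
  set (N := map fst (filter (fun e => isNeg (snd e)) s)).
  assert (HN : length N = negsS s) by (unfold N, negsS; apply length_map).
  exists (fun x => if in_dec Nat.eq_dec x (firstn d N) then Neg else Pos).
  exists (fun x => In x (skipn d N) /\ ~ In x (firstn d N)).
  split; [|split].
  - exists (firstn d N). split; [apply firstn_le_length|].
    intros x Hx. destruct (in_dec _ _ _); [assumption|discriminate].
  - exists (skipn d N). split; [rewrite length_skipn; lia|]. intros x [Hx _]; exact Hx.
  - intros [x y] Hin. simpl. unfold biased_value. destruct y.
    + assert (HxN : In x N).
      { unfold N. change x with (fst (x, Neg)). apply in_map. apply filter_In; auto. }
      rewrite <- (firstn_skipn d N) in HxN. apply in_app_or in HxN.
      destruct (in_dec Nat.eq_dec x (firstn d N)) as [Hf|Hf].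
      * right. split; [tauto|reflexivity].
      * left. destruct HxN as [Q|Q]; [contradiction|]. split; [split; auto|reflexivity].
    + assert (HxN : ~ In x N).
      { intro Q. unfold N in Q. apply in_map_iff in Q. destruct Q as [[x' y'] [E Q]].
        simpl in E; subst x'. apply filter_In in Q. destruct Q as [Q1 Q2].
        destruct y'; [|discriminate]. pose proof (nodup_fst_eq s Hnd x _ _ Hin Q1). discriminate. }
      assert (~ In x (firstn d N)).
      { intro Q. apply HxN. rewrite <- (firstn_skipn d N). apply in_or_app; auto. }
      right. split.
      * intros [Q _]. apply HxN. rewrite <- (firstn_skipn d N). apply in_or_app; auto.
      * destruct (in_dec _ _ _); [contradiction|reflexivity].
Qed.

Lemma big_nat (r : R) : exists N : nat, r < INR N.
Proof.
  destruct (Rle_or_lt r 0) as [Hr|Hr].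
  - exists 1%nat. simpl. lra.
  - destruct (archimed r) as [H1 _].
    assert (Hz : (0 < up r)%Z) by (apply lt_IZR; lra).
    exists (Z.to_nat (up r)). rewrite INR_IZR_INZ, Z2Nat.id by lia. lra.
Qed.

Theorem mainTheorem4 (d : nat) :
  exists (X : Type) (H : (X -> sign) -> Prop),
    littlestone_dim_eq H d /\
    forall k l : nat, (k < l + d)%nat ->
      forall a : R, 0 <= a ->
        exists A : adversary X,
          (forall L : learner X, valid_learner L -> l_biased H l (presented A L)) /\
          (forall L : learner X, valid_learner L ->
              guarantees_mistakes H l k L ->
              a <= cum_abstain L (presented A L)).
Proof.
  exists nat, (Hcl d). split; [apply ldim|].
  intros k l Hk a Ha.
  set (K := INR k).
  assert (HK : 0 <= K) by apply pos_INR.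
  set (eps := 1 / (K + 2)).
  assert (Heps1 : eps * (K + 2) = 1) by (unfold eps; field; lra).
  assert (Heps : 0 < eps < 1).
  { assert (0 < eps) by (unfold eps; apply Rdiv_lt_0_compat; lra). split; [lra|]. nra. }
  destruct (big_nat (a + K + 1)) as [N HN].
  set (n := ((k + 2) * N)%nat).
  exists (advF k n eps).
  assert (Hpl : forall L, exists ext, presented (advF k n eps) L = forget ext /\
    map fst (forget ext) = seq 0 n /\ (negsS (forget ext) <= S k)%nat /\
    (valid_learner L ->
      INR (negsS (forget ext)) * (1 - eps) <= cum_mistake L (forget ext) /\
      ((S k <= negsS (forget ext))%nat \/
       INR n * eps <= cum_mistake L (forget ext) + cum_abstain L (forget ext)
                      + INR (negsS (forget ext)) * eps))).
  { intros L. destruct (play_inv k n eps L n []) as [ext [E1 [E2 [E3 E4]]]].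
    exists ext. unfold presented. simpl adv_rounds. rewrite E1. simpl app.
    split; [reflexivity|]. split; [exact E2|]. split.
    - specialize (E3 ltac:(unfold negsS; simpl; lia)). unfold negsS in E3 |- *. simpl in E3. lia.
    - intros HV. specialize (E4 HV Heps). simpl in E4. unfold cum_mistake, cum_abstain.
      unfold negsS in E4 at 1 2. simpl in E4. exact E4. }
  split.
  - intros L HV. destruct (Hpl L) as [ext [E1 [E2 [E3 _]]]]. rewrite E1.
    apply biased_of; [rewrite E2; apply seq_NoDup|lia].
  - intros L HV Hg. destruct (Hpl L) as [ext [E1 [E2 [E3 E4]]]]. rewrite E1.
    specialize (E4 HV). destruct E4 as [E4a E4b].
    assert (Hb : l_biased (Hcl d) l (forget ext))
      by (apply biased_of; [rewrite E2; apply seq_NoDup|lia]).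
    specialize (Hg _ Hb). fold K in Hg.
    assert (HcN : INR (negsS (forget ext)) <= K + 1).
    { unfold K. rewrite <- S_INR. apply le_INR. exact E3. }
    assert (HcN0 : 0 <= INR (negsS (forget ext))) by apply pos_INR.
    destruct E4b as [E|E].
    + assert (negsS (forget ext) = S k) by lia.
      rewrite H, S_INR in E4a. fold K in E4a. exfalso. nra.
    + assert (Hn : INR n * eps = INR N).
      { unfold n. rewrite mult_INR, plus_INR. simpl (INR 2). fold K.
        replace (INR 2) with 2 by (simpl; lra). nra. }
      rewrite Hn in E. nra.
Qed.
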